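(* Consider the online adaptive minimum-weight basis problem with uniform query costs, where in addition the algorithm is given a predicted basis $\hat{B}$ of $M$. There is an algorithm that queries a set $Q$ which is a certificate verifying some minimum-weight basis of $\mathcal{M}$ and satisfies $$|Q|\le \min\{\,2\,(|Q^*|+\eta_1)+\eta_2\cdot c_{\max},\ n\,\},$$ where $Q^*$ is a minimum-cardinality certificate for $\mathcal{M}$, $n=|E|$, and $c_{\max}$ is the size of the largest circuit of $M$. In particular, the algorithm is $2$-consistent and $n$-robust.
   Context: A weighted uncertainty matroid $\mathcal{M}=(E,\mathcal{I},A,w)$ consists of a matroid $M=(E,\mathcal{I})$ on a finite ground set $E$, for each $e\in E$ an uncertainty area $A_e\subseteq\mathbb{R}$ that is a non-empty finite union of bounded real intervals (open or closed), and a weight $w_e\in A_e$. A minimum-weight basis (MWB) is a basis of $M$ minimizing total weight. A weight assignment is $w^*:E\to\mathbb{R}$ with $w^*_e\in A_e$; it is consistent with $Q\subseteq E$ if $w^*_e=w_e$ for $e\in Q$. A set $Q$ verifies an MWB $B$ (is a certificate for $B$) if for every weight assignment consistent with $Q$, $B$ is an MWB with respect to it; a certificate for $\mathcal{M}$ is a set verifying some MWB; with uniform costs, a minimum-cardinality certificate is a certificate of minimum size. The verification cost of an MWB $B$ is the minimum size of a certificate verifying $B$. $\mathrm{span}_M(X)=\{e\in E: r(X\cup\{e\})=r(X)\}$ where $r$ is the rank function. Online adaptive problem: the algorithm knows $M$ (via an independence oracle) and the areas $A_e$ but not the weights; querying $e$ reveals $w_e$ at unit cost; it adaptively queries elements until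 the queried set $Q$ is a certificate for $\mathcal{M}$. An algorithm is $\rho$-competitive if $|Q|\le\rho\cdot|Q^*|$ on every instance. Here the algorithm also receives a predicted basis $\hat B$ of $M$; it is $\alpha$-consistent if it is $\alpha$-competitive whenever the prediction is correct (i.e., $\hat B$ is an MWB that can be verified by a minimum-cardinality certificate of $\mathcal{M}$), and $\beta$-robust if it is $\beta$-competitive for arbitrary predictions. Errors: for $e\in E\setminus\hat B$ let $C_e$ be the fundamental circuit of $e$ with respect to $\hat B$ (the unique circuit in $\hat B\cup\{e\}$). $C_e$ is correct if $w_e\ge w_f$ for all $f\in C_e\setminus\{e\}$ and $w_f\le w_g$ for all $f\in C_e\setminus\{e\}$ and all $g\in E\setminus\mathrm{span}_M(\hat B\setminus\{f\})$; otherwise incorrect. Let $\hat B_s\subseteq\hat B$ be the set of elements of $\hat B$ lying in some correct circuit $C_e$, $e\in E\setminus\hat B$. Let $\hat B_s^*$ be an MWB containing $\hat B_s$ of minimum verification cost among all MWBs containing $\hat B_s$, and let $Q'$ be a minimum-cardinality certificate verifying $\hat B_s^*$. Define $\eta_1=|Q'|-|Q^*|$ and $\eta_2$ as the number of incorrect circuits $C_e$, $e\in E\setminus\hat B$. *)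

(* Defs.v *)
From HB Require Import structures.
From mathcomp Require Import all_boot all_order all_algebra.
From mathcomp Require Import reals.
Set Implicit Arguments. Unset Strict Implicit. Unset Printing Implicit Defensive.
Import Order.TTheory GRing.Theory Num.Theory.
Local Open Scope ring_scope.

Record matroid (E : finType) := Matroid {
  indep : {set E} -> bool;
  indep0 : indep set0;
  indep_sub : forall A B : {set E}, B \subset A -> indep A -> indep B;
  indep_exchange : forall A B : {set E}, indep A -> indep B -> (#|A| < #|B|)%N ->
      exists2 x, x \in B :\: A & indep (x |: A) }.

Section Matroid.
Variables (E : finType) (M : matroid E).

Definition is_basis (B : {set E}) : bool :=
  indep M B && [forall e, indep M (e |: B) ==> (e \in B)].

Definition circuit (C : {set E}) : bool :=
  ~~ indep M C && [forall D : {set E}, (D \proper C) ==> indep M D].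

Definition rank (X : {set E}) : nat :=
  \max_(Y : {set E} | (Y \subset X) && indep M Y) #|Y|.

Definition span (X : {set E}) : {set E} :=
  [set e | rank (e |: X) == rank X].

(* size of the largest circuit (0 if there is none) *)
Definition cmax : nat := \max_(C : {set E} | circuit C) #|C|.

(* C is the fundamental circuit of e w.r.t. B: the (unique) circuit in B + e *)
Definition fund_circuit (B : {set E}) (e : E) (C : {set E}) : bool :=
  circuit C && (C \subset e |: B).
End Matroid.

Section Uncertainty.
Variable R : realType.

Definition bounded_itv (I : interval R) : bool :=
  match I with
  | Interval (BSide _ _) (BSide _ _) => true
  | _ => false
  end.

(* an uncertainty area is given by a finite list of bounded intervals;
   x lies in the area iff it lies in one of them *)
Definition in_area (A : seq (interval R)) (x : R) : bool :=
  has (fun I => x \in I) A.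

Variables (E : finType) (M : matroid E) (A : E -> seq (interval R)).

Definition weight (w : E -> R) (B : {set E}) : R := \sum_(e in B) w e.

Definition is_MWB (w : E -> R) (B : {set E}) : Prop :=
  is_basis M B /\ forall B', is_basis M B' -> weight w B <= weight w B'.

Definition consistent (w : E -> R) (Q : {set E}) (w' : E -> R) : Prop :=
  (forall e, in_area (A e) (w' e)) /\ (forall e, e \in Q -> w' e = w e).

Definition verifies (w : E -> R) (Q B : {set E}) : Prop :=
  forall w', consistent w Q w' -> is_MWB w' B.

Definition certificate (w : E -> R) (Q : {set E}) : Prop :=
  exists B, verifies w Q B.

Definition min_certificate (w : E -> R) (Q : {set E}) : Prop :=
  certificate w Q /\ forall Q', certificate w Q' -> (#|Q| <= #|Q'|)%N.

Definition correct_circ (w : E -> R) (Bh : {set E}) (e : E) (C : {set E}) : bool :=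
  [forall f in C :\ e, w f <= w e] &&
  [forall f in C :\ e, forall g in ~: span M (Bh :\ f), w f <= w g].

Definition circ_correct (w : E -> R) (Bh : {set E}) (e : E) : bool :=
  [exists C : {set E}, fund_circuit M Bh e C && correct_circ w Bh e C].

Definition Bhat_s (w : E -> R) (Bh : {set E}) : {set E} :=
  [set f in Bh | [exists e, (e \notin Bh) &&
      [exists C : {set E}, [&& fund_circuit M Bh e C, correct_circ w Bh e C
                               & f \in C]]]].

Definition eta2 (w : E -> R) (Bh : {set E}) : nat :=
  #|[set e | (e \notin Bh) && ~~ circ_correct w Bh e]|.

(* Bs is an MWB containing \hat B_s of minimum verification cost among all
   such MWBs, and Q' is a minimum-cardinality certificate verifying Bs *)
Definition opt_Bs_cert (w : E -> R) (Bh Bs Q' : {set E}) : Prop :=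
  [/\ is_MWB w Bs, Bhat_s w Bh \subset Bs, verifies w Q' Bs,
      (forall Q, verifies w Q Bs -> (#|Q'| <= #|Q|)%N) &
      (forall B' Q, is_MWB w B' -> Bhat_s w Bh \subset B' -> verifies w Q B' ->
         exists2 Q'', verifies w Q'' Bs & (#|Q''| <= #|Q|)%N)].

Definition eta1 (Qstar Q' : {set E}) : nat := (#|Q'| - #|Qstar|)%N.

(* A strategy maps the history (queried elements with revealed weights) to
   the next element to query, or None to stop. *)
Fixpoint history (strat : seq (E * R) -> option E) (w : E -> R) (k : nat)
  : seq (E * R) :=
  match k with
  | 0 => [::]
  | k'.+1 => let h := history strat w k' in
             match strat h with
             | Some e => rcons h (e, w e)
             | None => h
             end
  end.

Definition queried (h : seq (E * R)) : {set E} := [set e | e \in map fst h].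
End Uncertainty.

(* Main.v *)
Require Import Defs.
From HB Require Import structures.
From mathcomp Require Import all_boot all_order all_algebra.
From mathcomp Require Import reals.
From mathcomp Require Import boolp.
From mathcomp Require Import zify.
Set Implicit Arguments. Unset Strict Implicit. Unset Printing Implicit Defensive.
Import Order.TTheory GRing.Theory Num.Theory.
Section Mat.
Variables (E : finType) (M : matroid E).

Lemma ext_max (I X : {set E}) : indep M I -> I \subset X ->
  exists J, [/\ indep M J, I \subset J, J \subset X &
    forall K : {set E}, K \subset X -> indep M K -> #|K| <= #|J|].
Proof.
move=> HI HIX.
suff H : forall n (I : {set E}), #|X| - #|I| <= n -> indep M I -> I \subset X ->
  exists J, [/\ indep M J, I \subset J, J \subset X &
    forall K : {set E}, K \subset X -> indep M K -> #|K| <= #|J|] by exact: (H _ I (leqnn _)).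
elim=> [|n IH] {HI HIX} I Hn HI HIX.
  exists I; split=> // K KX HK.
  by rewrite (leq_trans (subset_leq_card KX)) // -subn_eq0 -leqn0.
case: (boolP [exists K : {set E}, [&& K \subset X, indep M K & #|I| < #|K|]]).
  case/existsP=> K /and3P [KX HK ltIK].
  have [x /setDP [xK xI] Hx] := indep_exchange HI HK ltIK.
  have xIX : x |: I \subset X by rewrite subUset sub1set (subsetP KX) ?HIX.
  have [J [HJ sJ JX HJm]] : exists J, [/\ indep M J, x |: I \subset J, J \subset X &
    forall K : {set E}, K \subset X -> indep M K -> #|K| <= #|J|].
    apply: IH => //.
    have: #|x |: I| <= #|X| by exact: subset_leq_card.
    rewrite cardsU1 xI /= add1n => H1; lia.
  exists J; split=> //; apply: subset_trans sJ; exact: subsetUr.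
move=> /existsPn HK; exists I; split=> // K KX HKi.
by move: (HK K); rewrite KX HKi /= -leqNgt.
Qed.

Lemma basis_indep (B : {set E}) : is_basis M B -> indep M B.
Proof. by case/andP. Qed.

Lemma basis_max (B : {set E}) e : is_basis M B -> indep M (e |: B) -> e \in B.
Proof. by case/andP=> _ /forallP /(_ e) /implyP. Qed.

Lemma basis_card (B J : {set E}) : is_basis M B -> indep M J -> #|B| <= #|J| -> is_basis M J.
Proof.
move=> HB HJ le; rewrite /is_basis HJ /=; apply/forallP=> e; apply/implyP=> He.
apply/negPn/negP=> eJ.
have lt : #|B| < #|e |: J| by rewrite cardsU1 eJ add1n ltnS.
have [y /setDP [_ yB] Hy] := indep_exchange (basis_indep HB) He lt.
by rewrite (basis_max HB Hy) in yB.
Qed.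

Lemma circuit_proper (C D : {set E}) : circuit M C -> D \proper C -> indep M D.
Proof. by case/andP=> _ /forallP /(_ D) /implyP. Qed.

Lemma circuit_dep (C : {set E}) : circuit M C -> ~~ indep M C.
Proof. by case/andP. Qed.

Lemma swap (B C : {set E}) x y : is_basis M B -> circuit M C -> C \subset x |: B ->
  x \notin B -> y \in C -> is_basis M ((x |: B) :\ y).
Proof.
move=> HB HC CxB xB yC.
have I0ind : indep M (C :\ y) by apply: circuit_proper HC _; exact: properD1.
have I0X : C :\ y \subset x |: B by apply: subset_trans CxB; exact: subsetDl.
have [J [HJ sJ JX Jm]] := ext_max I0ind I0X.
have BJ : #|B| <= #|J| by apply: Jm; [exact: subsetUr | exact: basis_indep].
have yJ : y \notin J.
  apply/negP=> yJ; move/negP: (circuit_dep HC); apply; apply: indep_sub HJ.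
  apply/subsetP=> z zC; case: (eqVneq z y) => [-> //|zy].
  by apply: (subsetP sJ); rewrite in_setD1 zy zC.
have JD : J \subset (x |: B) :\ y by rewrite subsetD1 JX yJ.
have cD : #|(x |: B) :\ y| = #|B|.
  have := cardsD1 y (x |: B); rewrite (subsetP CxB _ yC) cardsU1 xB; lia.
have -> : (x |: B) :\ y = J.
  by apply/eqP; rewrite eq_sym eqEcard JD cD BJ.
exact: basis_card HB HJ BJ.
Qed.

Lemma fund_exists (B : {set E}) e : is_basis M B -> e \notin B -> exists C, fund_circuit M B e C.
Proof.
move=> HB eB.
have dep : ~~ indep M (e |: B) by apply/negP=> /(basis_max HB); rewrite (negbTE eB).
pose P := fun C : {set E} => (C \subset e |: B) && ~~ indep M C.
have P0 : P (e |: B) by rewrite /P subxx dep.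
case: (arg_minnP (fun C : {set E} => #|C|) P0) => C /andP [CeB HC] Cmin.
exists C; rewrite /fund_circuit CeB andbT /circuit HC /=.
apply/forallP=> D; apply/implyP=> DC; apply/negPn/negP=> HD.
have := Cmin D; rewrite /P (subset_trans (proper_sub DC) CeB) HD => /(_ isT).
by rewrite leqNgt proper_card.
Qed.

Lemma fund_in (B : {set E}) e (C : {set E}) : is_basis M B -> fund_circuit M B e C -> e \in C.
Proof.
move=> HB /andP [HC CeB]; apply/negPn/negP=> eC.
move/negP: (circuit_dep HC); apply; apply: indep_sub (basis_indep HB).
apply/subsetP=> z zC; move: (subsetP CeB z zC); rewrite in_setU1.
by case/orP=> // /eqP ze; rewrite -ze zC in eC.
Qed.

Lemma fund_uniq (B : {set E}) e (C1 C2 : {set E}) : is_basis M B -> e \notin B ->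
  fund_circuit M B e C1 -> fund_circuit M B e C2 -> C1 = C2.
Proof.
move=> HB eB.
suff H : forall C1 C2, fund_circuit M B e C1 -> fund_circuit M B e C2 -> C1 \subset C2.
  by move=> F1 F2; apply/eqP; rewrite eqEsubset !(H _ _ F1 F2, H _ _ F2 F1).
move=> D1 D2 F1 F2; apply/subsetP=> x xD1; apply/negPn/negP=> xD2.
case/andP: F1 => H1 S1; case/andP: F2 => H2 S2.
have := swap HB H1 S1 eB xD1 => /basis_indep Hi.
move/negP: (circuit_dep H2); apply; apply: indep_sub Hi.
by rewrite subsetD1 S2 xD2.
Qed.

Lemma rank_indep (X : {set E}) : indep M X -> Defs.rank M X = #|X|.
Proof.
move=> HX; apply/eqP; rewrite eqn_leq; apply/andP; split.
  by apply/bigmax_leqP=> Y /andP [YX _]; exact: subset_leq_card.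
by apply: (leq_bigmax_cond (F := fun Y : {set E} => #|Y|)); rewrite subxx HX.
Qed.

Lemma span_indep (X : {set E}) g : indep M X -> g \notin Defs.span M X -> indep M (g |: X) && (g \notin X).
Proof.
move=> HX; rewrite inE (rank_indep HX) => ne.
have gX : g \notin X.
  apply/negP=> gX; move: ne; rewrite (setUidPr _) ?sub1set // (rank_indep HX).
  by rewrite eqxx.
rewrite gX andbT.
have ge : #|X| <= Defs.rank M (g |: X).
  by apply: (leq_bigmax_cond (F := fun Y : {set E} => #|Y|)); rewrite subsetUr HX.
have gt : #|X| < Defs.rank M (g |: X) by rewrite ltn_neqAle eq_sym ne ge.
case: (boolP [exists Y : {set E}, [&& Y \subset g |: X, indep M Y & #|X| < #|Y|]]).
  case/existsP=> Y /and3P [YgX HY lt].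
  have -> : g |: X = Y.
    apply/eqP; rewrite eq_sym eqEcard YgX cardsU1 gX add1n; exact: lt.
  exact: HY.
move/existsPn=> HN; move: gt; rewrite ltnNge => /negP; case.
apply/bigmax_leqP=> Y /andP [YgX HY]; move: (HN Y).
by rewrite YgX HY /= -leqNgt.
Qed.

Lemma indep_notspan (X : {set E}) g : indep M (g |: X) -> g \notin X -> g \notin Defs.span M X.
Proof.
move=> Hg gX; have HX : indep M X by apply: indep_sub Hg; exact: subsetUr.
by rewrite inE (rank_indep Hg) (rank_indep HX) cardsU1 gX add1n neq_ltn ltnSn orbT.
Qed.

Lemma dual (Bh : {set E}) f g (C : {set E}) : is_basis M Bh -> f \in Bh -> g \notin Defs.span M (Bh :\ f) ->
  fund_circuit M Bh g C -> f \in C.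
Proof.
move=> HB fB gs /andP [HC CgB]; apply/negPn/negP=> fC.
have Hi : indep M (Bh :\ f) by apply: indep_sub (basis_indep HB); exact: subsetDl.
case/andP: (span_indep Hi gs) => Hg _.
move/negP: (circuit_dep HC); apply; apply: indep_sub Hg.
apply/subsetP=> z zC; move: (subsetP CgB z zC); rewrite !in_setU1 in_setD1.
case/orP=> [->//|zB]; apply/orP; right; rewrite zB andbT.
by apply/negP=> /eqP zf; rewrite -zf zC in fC.
Qed.

Lemma exch_cocirc (Bh : {set E}) f (C : {set E}) : is_basis M Bh -> f \in Bh -> circuit M C -> f \in C ->
  exists2 g, g \in C :\ f & indep M (g |: (Bh :\ f)) && (g \notin Bh :\ f).
Proof.
move=> HB fB HC fC.
have P0i : indep M (C :\ f) by apply: circuit_proper HC _; exact: properD1.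
have P0X : C :\ f \subset (C :\ f) :|: (Bh :\ f) by exact: subsetUl.
have [J [HJ sJ JX Jm]] := ext_max P0i P0X.
have BJ : #|Bh| <= #|J|.
  rewrite leqNgt; apply/negP=> lt.
  have [x /setDP [xB xJ] Hx] := indep_exchange HJ (basis_indep HB) lt.
  case: (eqVneq x f) => [xf|xf].
    move/negP: (circuit_dep HC); apply; apply: indep_sub Hx.
    apply/subsetP=> z zC; rewrite in_setU1; case: (eqVneq z x) => //= zx.
    by apply: (subsetP sJ); rewrite in_setD1 -xf zx zC.
  have Hs : x |: J \subset (C :\ f) :|: (Bh :\ f).
    by rewrite subUset sub1set JX in_setU !in_setD1 xf xB orbT.
  by have := Jm _ Hs Hx; rewrite cardsU1 (negbTE xJ) add1n ltnn.
have lt : #|Bh :\ f| < #|J|.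
  by move: BJ; rewrite (cardsD1 f Bh) fB; lia.
have [g /setDP [gJ gB] Hg] := indep_exchange (indep_sub (subsetDl _ _) (basis_indep HB)) HJ lt.
exists g; last by rewrite Hg gB.
by move: (subsetP JX g gJ); rewrite in_setU (negbTE gB) orbF.
Qed.

Section W.
Variable R : realType.
Local Open Scope ring_scope.

Lemma weight_swap (u : E -> R) (B : {set E}) f g : f \notin B -> g \in B ->
  weight u ((f |: B) :\ g) + u g = u f + weight u B.
Proof.
move=> fB gB; rewrite /weight.
have gfB : g \in f |: B by rewrite in_setU1 gB orbT.
by rewrite -(@big_setU1 _ _ _ _ f B u fB) /= (@big_setD1 _ _ _ _ g _ u gfB) /= addrC.
Qed.

Lemma L1 (u : E -> R) (Bh S : {set E}) : is_basis M Bh -> S \subset Bh ->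
  (forall f g, f \in S -> g \notin Defs.span M (Bh :\ f) -> u f <= u g) ->
  forall B, is_basis M B ->
  exists B1, [/\ is_basis M B1, S \subset B1 & weight u B1 <= weight u B].
Proof.
move=> HBh SB Hu B HB.
move: {2}#|S :\: B| (leqnn #|S :\: B|) => n; elim: n B HB => [|n IH] B HB Hn.
  exists B; split=> //; apply/subsetP=> x xS; apply/negPn/negP=> xB.
  by move: Hn; rewrite leqn0 => /eqP/cards0_eq/setP/(_ x); rewrite inE xS xB inE.
case: (boolP (S \subset B)) => [SB'|].
  by exists B; split.
case/subsetPn=> f fS fB.
have [C FC] := fund_exists HB fB.
have fC := fund_in HB FC.
case/andP: (FC) => HC CfB.
have fBh := subsetP SB f fS.
have [g gC /andP [Hg gB']] := exch_cocirc HBh fBh HC fC.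
have gf : g != f by move: gC; rewrite in_setD1 => /andP [].
have gB : g \in B.
  move: (subsetP CfB g (subsetP (subsetDl _ _) g gC)); rewrite in_setU1.
  by rewrite (negbTE gf).
have gsp : g \notin Defs.span M (Bh :\ f) by exact: indep_notspan.
have gS : g \notin S.
  apply/negP=> /(subsetP SB) gBh; move: gB'; rewrite in_setD1 gf gBh.
  by [].
have HB' := swap HB HC CfB fB (subsetP (subsetDl _ _) g gC).
have Hc : (#|S :\: ((f |: B) :\ g)| < #|S :\: B|)%N.
  apply: proper_card; rewrite properEneq; apply/andP; split.
    apply/eqP=> /setP/(_ f); rewrite !inE fS fB eqxx /= andbT.
    by rewrite andbT eq_sym gf.
  apply/subsetP=> x; rewrite !inE => /andP [/negP xn xS]; rewrite xS andbT.
  apply/negP=> xB; apply: xn; apply/andP; split.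
    by apply/negP=> /eqP xg; move: gS; rewrite -xg xS.
  by rewrite xB orbT.
have [B1 [HB1 SB1 W1]] := IH _ HB' (leq_trans (leq_trans Hc Hn) (leqnn _)).
exists B1; split=> //; apply: le_trans W1 _.
have := weight_swap u fB gB; have := Hu f g fS gsp.
move=> H1 H2; rewrite -(lerD2r (u g)) H2 addrC.
by rewrite lerD2l.
Qed.
End W.
End Mat.

Section Alg.
Variables (R : realType) (E : finType) (M : matroid E) (A : E -> seq (interval R)).
Variable (Bh : {set E}).
Hypothesis HBh : is_basis M Bh.
Local Open Scope ring_scope.

Definition cons_h (h : seq (E * R)) (w' : E -> R) : Prop :=
  (forall e, in_area (A e) (w' e)) /\ (forall p, p \in h -> w' p.1 = p.2).

Definition certh (h : seq (E * R)) : Prop :=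
  exists B, forall w', cons_h h w' -> is_MWB M w' B.

Definition fpair (e f : E) : Prop :=
  e \notin Bh /\ exists C, fund_circuit M Bh e C /\ f \in C :\ e.

Definition conflict h (e f : E) : Prop := exists w', cons_h h w' /\ w' e < w' f.

Definition badf (h : seq (E * R)) (f : E) : Prop :=
  exists g vf vg, [/\ g \notin Defs.span M (Bh :\ f), (f, vf) \in h, (g, vg) \in h & vg < vf].

Definition R1 h z : Prop := z \notin queried h /\
  exists e C, [/\ e \notin Bh, fund_circuit M Bh e C, z \in C &
                  exists2 f, f \in C :\ e & badf h f].

Definition R2 h z : Prop := z \notin queried h /\
  exists e f, [/\ fpair e f, conflict h e f &
     ((z == e) && (f \in queried h)) || ((z == f) && (e \in queried h))].

Definition R3 h e f : Prop :=
  [/\ e \notin queried h, f \notin queried h, fpair e f & conflict h e f].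

Definition decide (h : seq (E * R)) : option (E * option E) :=
  match [pick z | `[< R1 h z >]] with
  | Some z => Some (z, None)
  | None => match [pick z | `[< R2 h z >]] with
    | Some z => Some (z, None)
    | None => match [pick p : E * E | `[< R3 h p.1 p.2 >]] with
      | Some p => Some (p.1, Some p.2)
      | None => None
      end
    end
  end.

Fixpoint pendR (rh : seq (E * R)) : option E :=
  match rh with
  | [::] => None
  | p :: rh' => if pendR rh' is Some _ then None else
      match decide (rev rh') with
      | Some (x, Some y) => if (x == p.1) && (y \notin queried (rev rh)) then Some y else None
      | _ => None
      end
  end.

Definition pend h := pendR (rev h).

Definition strat (h : seq (E * R)) : option E :=
  if `[< certh h >] then None else
  match pend h with Some y => Some y | None => omap fst (decide h) end.

Lemma decide_none h : decide h = None ->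
  [/\ forall z, ~ R1 h z, forall z, ~ R2 h z & forall e f, ~ R3 h e f].
Proof.
rewrite /decide; case: pickP => [//|H1]; case: pickP => [//|H2].
case: pickP => [//|H3] _; split.
- by move=> z /asboolP; rewrite H1.
- by move=> z /asboolP; rewrite H2.
- by move=> e f /asboolP; move: (H3 (e, f)) => /= ->.
Qed.

Lemma decide_single h z : decide h = Some (z, None) -> R1 h z \/ R2 h z.
Proof.
rewrite /decide; case: pickP => [z1 /asboolP H1 [<-]|_]; first by left.
case: pickP => [z1 /asboolP H1 [<-]|_]; first by right.
by case: pickP => [[a b] _ //|_].
Qed.

Lemma decide_pair h x y : decide h = Some (x, Some y) -> R3 h x y.
Proof.
rewrite /decide; case: pickP => [z1 _ //|_].
case: pickP => [z1 _ //|_].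
by case: pickP => [[a b] /asboolP /= H [<- <-]|_].
Qed.

Lemma queried_rcons (h : seq (E * R)) p : queried (rcons h p) = p.1 |: queried h.
Proof.
by apply/setP=> x; rewrite !inE map_rcons mem_rcons in_cons.
Qed.

Lemma pend_rcons h p : pend (rcons h p) =
  if pend h is Some _ then None else
  match decide h with
  | Some (x, Some y) => if (x == p.1) && (y \notin queried (rcons h p)) then Some y else None
  | _ => None
  end.
Proof. by rewrite /pend rev_rcons /= revK rev_cons revK. Qed.

Lemma pend_new h y : pend h = Some y -> y \notin queried h.
Proof.
case/lastP: h => [//|h p]; rewrite pend_rcons.
case: (pend h) => // ; case: (decide h) => [[x [y'|]]|] //.
by case: ifP => // /andP [_ H] [<-].
Qed.

Lemma strat_new h z : strat h = Some z -> z \notin queried h.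
Proof.
rewrite /strat; case: ifP => // _; case E1: (pend h) => [y|].
  by case=> <-; exact: pend_new.
case E2: (decide h) => [[x o]|] //= [<-].
case: o E2 => [y|] E2.
  by case: (decide_pair E2).
by case: (decide_single E2) => [[]|[]].
Qed.


Definition goodh (w : E -> R) (h : seq (E * R)) := forall p, p \in h -> p.2 = w p.1.

Lemma hist_vals w k : goodh w (history strat w k).
Proof.
elim: k => [//|k IH] /=; case: (strat _) => [z|//] p.
by rewrite mem_rcons in_cons => /orP [/eqP -> //|]; exact: IH.
Qed.

Lemma cons_iff h w w' : goodh w h ->
  cons_h h w' <-> consistent A w (queried h) w'.
Proof.
move=> Hg; split=> [[H1 H2]|[H1 H2]]; split=> //.
  move=> e; rewrite inE => /mapP [p pH ->]; rewrite H2 //; exact: Hg.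
move=> p pH; rewrite (Hg p pH); apply: H2; rewrite inE; apply/mapP; by exists p.
Qed.

Lemma cons_q h w w' q : goodh w h -> cons_h h w' -> q \in queried h -> w' q = w q.
Proof. by move=> Hg /(cons_iff w' Hg) [_ H]; exact: H. Qed.

Lemma q_mem h w q : goodh w h -> q \in queried h -> (q, w q) \in h.
Proof.
move=> Hg; rewrite inE => /mapP [p pH ->].
by rewrite -(Hg p pH); case: p pH.
Qed.

Lemma terminates w : exists k, strat (history strat w k) = None.
Proof.
apply/not_existsP => /= Hn.
suff H : forall k, #|queried (history strat w k)| = k.
  by have := max_card (mem (queried (history strat w #|E|.+1))); rewrite H ltnn.
elim=> [|k IH] /=; first by apply/eqP; rewrite cards_eq0; apply/eqP/setP=> x; rewrite !inE.
case E1: (strat _) => [z|]; last by case: (Hn k).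
rewrite queried_rcons /= cardsU1 (strat_new E1) IH //.
Qed.

Lemma wsplit (u : E -> R) (S X : {set E}) : S \subset X ->
  weight u X = weight u S + weight u (X :\: S).
Proof. by move=> SX; rewrite /weight (big_setID S) /= (setIidPr SX). Qed.

Lemma stuck h w : goodh w h ->
  (forall z, ~ R1 h z) -> (forall z, ~ R2 h z) -> (forall e f, ~ R3 h e f) -> certh h.
Proof.
move=> Hg N1 N2 N3.
set P := queried h.
pose S := [set f in Bh | ~~ `[< badf h f >]].
have SB : S \subset Bh by apply/subsetP=> x; rewrite inE => /andP [].
have ClA : forall w', cons_h h w' -> forall f g, f \in S ->
    g \notin Defs.span M (Bh :\ f) -> w' f <= w' g.
  move=> w' Hc f g; rewrite inE => /andP [fB /asboolPn nb] gs.
  case: (eqVneq g f) => [-> //|gf].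
  have Hi : indep M (Bh :\ f) by apply: indep_sub (basis_indep HBh); exact: subsetDl.
  case/andP: (span_indep Hi gs) => _ gBf.
  have gB : g \notin Bh by move: gBf; rewrite in_setD1 gf.
  have [C FC] := fund_exists HBh gB.
  have fC := dual HBh fB gs FC.
  have fp : fpair g f.
    by split=> //; exists C; split=> //; rewrite in_setD1 eq_sym gf fC.
  rewrite leNgt; apply/negP=> lt.
  case: (boolP (g \in P)) => gP; case: (boolP (f \in P)) => fP.
  - apply: nb; exists g, (w f), (w g); split=> //; try exact: q_mem.
    by rewrite -(cons_q Hg Hc gP) -(cons_q Hg Hc fP).
  - apply: (N2 f); split=> //; exists g, f; split=> //; last by rewrite eqxx gP orbT.
    by exists w'.
  - apply: (N2 g); split=> //; exists g, f; split=> //; last by rewrite eqxx fP.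
    by exists w'.
  - by apply: (N3 g f); split=> //; exists w'.
have ClC : forall B1, is_basis M B1 -> S \subset B1 -> B1 :\: S \subset P.
  move=> B1 HB1 SB1; apply/subsetP=> x; rewrite in_setD => /andP [xS xB1].
  case: (boolP (x \in Bh)) => xB.
    move: xS; rewrite inE xB /= negbK => /asboolP [g [vf [vg [_ H _ _]]]].
    by rewrite inE; apply/mapP; exists (x, vf).
  have [C FC] := fund_exists HBh xB.
  have xC := fund_in HBh FC.
  case: (boolP [exists f in C :\ x, `[< badf h f >]]).
    case/existsP=> f /andP [fC /asboolP bf].
    apply/negPn/negP=> xP; apply: (N1 x); split=> //; exists x, C; split=> //.
    by exists f.
  move/existsPn=> nb; exfalso; case/andP: FC => HC CxB.
  move/negP: (circuit_dep HC); apply; apply: indep_sub (basis_indep HB1).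
  apply/subsetP=> y yC; case: (eqVneq y x) => [-> //|yx].
  apply: (subsetP SB1); rewrite inE.
  have := subsetP CxB y yC; rewrite in_setU1 (negbTE yx) /= => ->.
  by move: (nb y); rewrite in_setD1 yx yC.
pose Pb := fun B : {set E} => is_basis M B && (S \subset B).
have Pb0 : Pb Bh by rewrite /Pb HBh SB.
case: (arg_minP (fun B : {set E} => weight w B) Pb0) => Bst /andP [HBst SBst] Bmin.
exists Bst => w' Hc; split=> // B HB.
have [B1 [HB1 SB1 W1]] := L1 HBh SB (ClA w' Hc) HB.
apply: le_trans W1.
have wq : forall X : {set E}, X \subset P -> weight w' X = weight w X.
  move=> X XP; apply: eq_bigr=> x xX; exact: (cons_q Hg Hc (subsetP XP x xX)).
rewrite (wsplit _ SBst) (wsplit _ SB1) (wq _ (ClC _ HBst SBst)) (wq _ (ClC _ HB1 SB1)).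
rewrite lerD2l.
have := Bmin B1; rewrite /Pb HB1 SB1 => /(_ isT).
by rewrite (wsplit _ SBst) (wsplit _ SB1) lerD2l.
Qed.

Section Charge.
Variables (w : E -> R) (Bs Q' : {set E}).
Hypothesis Hw : forall e, in_area (A e) (w e).
Hypothesis HBs : is_MWB M w Bs.
Hypothesis HsB : Bhat_s M w Bh \subset Bs.
Hypothesis HQ' : verifies M A w Q' Bs.

Lemma charge h e f : goodh w h -> fpair e f -> conflict h e f -> circ_correct M w Bh e ->
  exists2 z, (z == e) || (z == f) & (z \notin queried h) && (z \in Q').
Proof.
move=> Hg [eB [C [FC fC]]] [w'' [Hc lt]] /existsP [C0 /andP [FC0 cc]].
have eq0 := fund_uniq HBh eB FC0 FC; subst C0.
case: (boolP [exists z, [&& (z == e) || (z == f), z \notin queried h & z \in Q']]).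
  by case/existsP=> z /and3P [H1 H2 H3]; exists z => //; rewrite H2 H3.
move/existsPn=> Hn; exfalso.
case/andP: (FC) => HC CeB.
have CB : C :\ e \subset Bs.
  apply: subset_trans HsB; apply/subsetP=> x xC; rewrite inE.
  have xB : x \in Bh.
    move: xC; rewrite in_setD1 => /andP [xe xC].
    by move: (subsetP CeB x xC); rewrite in_setU1 (negbTE xe).
  rewrite xB /=; apply/existsP; exists e; rewrite eB /=; apply/existsP; exists C.
  by rewrite FC cc (subsetP (subsetDl _ _) x xC).
have CeBs : C \subset e |: Bs.
  apply/subsetP=> x xC; rewrite in_setU1; case: (eqVneq x e) => //= xe.
  by apply: (subsetP CB); rewrite in_setD1 xe xC.
case: HBs => HBs1 HBs2.
have eBs : e \notin Bs.
  apply/negP=> eBs; move/negP: (circuit_dep HC); apply; apply: indep_sub (basis_indep HBs1).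
  apply/subsetP=> x xC; move: (subsetP CeBs x xC); rewrite in_setU1.
  by case/orP=> // /eqP ->.
have fC' : f \in C by move: fC; rewrite in_setD1 => /andP [].
have fe : f != e by move: fC; rewrite in_setD1 => /andP [].
have HB' := swap HBs1 HC CeBs eBs fC'.
pose w' := fun x => if (x == e) || (x == f) then w'' x else w x.
have Hcons : consistent A w Q' w'.
  split=> [x|x xQ]; rewrite /w'; case: ifP => // Hx.
    exact: Hc.1.
  move: (Hn x); rewrite Hx xQ andbT /= negbK => xP.
  exact: (cons_q Hg Hc xP).
case: (HQ' Hcons) => _ Hm.
have := Hm _ HB'.
have := weight_swap w' eBs (subsetP CB f fC).
move=> Hs Hle.
have : w' f <= w' e.
  by rewrite -(lerD2l (weight w' Bs)) [X in _ <= X]addrC -Hs lerD2r.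
rewrite /w' eqxx orbT eqxx /=.
by rewrite leNgt lt.
Qed.

Definition U : {set E} := [set x | [exists e, [&& e \notin Bh, ~~ circ_correct M w Bh e &
  [exists C, fund_circuit M Bh e C && (x \in C)]]]].

Lemma inU e C x : e \notin Bh -> ~~ circ_correct M w Bh e -> fund_circuit M Bh e C ->
  x \in C -> x \in U.
Proof.
move=> eB nc FC xC; rewrite inE; apply/existsP; exists e; rewrite eB nc /=.
by apply/existsP; exists C; rewrite FC xC.
Qed.

Lemma U_card : (#|U| <= eta2 M w Bh * cmax M)%N.
Proof.
pose I := [set e | (e \notin Bh) && ~~ circ_correct M w Bh e].
pose F := fun e => [set x | [exists C, fund_circuit M Bh e C && (x \in C)]].
have UI : U \subset \bigcup_(e in I) F e.
  apply/subsetP=> x; rewrite inE => /existsP [e /and3P [eB nc /existsP [C /andP [FC xC]]]].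
  apply/bigcupP; exists e; first by rewrite inE eB nc.
  by rewrite inE; apply/existsP; exists C; rewrite FC xC.
apply: (leq_trans (subset_leq_card UI)).
have -> : (eta2 M w Bh * cmax M = \sum_(e in I) cmax M)%N by rewrite sum_nat_const.
apply: (big_ind2 (fun (X : {set E}) n => #|X| <= n)%N).
- by rewrite cards0.
- by move=> X1 n1 X2 n2 H1 H2; rewrite cardsU; lia.
move=> e _.
case: (boolP [exists C, fund_circuit M Bh e C]).
  case/existsP=> C FC.
  have -> : F e = C.
    apply/setP=> x; rewrite inE; apply/existsP/idP => [[C' /andP [FC' xC']]|xC].
      have eB : e \notin Bh.
        apply/negP=> eB; move/negP: (circuit_dep (proj1 (andP FC))); apply.
        apply: indep_sub (basis_indep HBh); apply: subset_trans (proj2 (andP FC)) _.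
        by rewrite subUset sub1set eB subxx.
      by rewrite (fund_uniq HBh eB FC' FC) in xC'.
    by exists C; rewrite FC xC.
  by apply: (leq_bigmax_cond (F := fun C : {set E} => #|C|)); case/andP: FC.
move/existsPn=> nF.
have -> : F e = set0.
  apply/setP=> x; rewrite !inE; apply/existsP=> [[C /andP [FC _]]].
  by move: (nF C); rewrite FC.
by rewrite cards0.
Qed.

Lemma R1_U h z : goodh w h -> R1 h z -> z \in U.
Proof.
move=> Hg [_ [e [C [eB FC zC [f fC [g [vf [vg [gs fH gH lt]]]]]]]]].
apply: (inU eB _ FC zC); apply/negP=> /existsP [C0 /andP [FC0 cc]].
rewrite (fund_uniq HBh eB FC0 FC) in cc.
case/andP: cc => _ /forall_inP /(_ f fC) /forall_inP /(_ g).
rewrite inE gs => /(_ isT).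
by rewrite -(Hg _ fH) -(Hg _ gH) /= leNgt lt.
Qed.

Lemma pc h e f : goodh w h -> fpair e f -> conflict h e f ->
  (e \in U) && (f \in U) \/
  exists2 z, (z == e) || (z == f) & (z \notin queried h) && (z \in Q').
Proof.
move=> Hg fp cf; case: (boolP (circ_correct M w Bh e)) => cc.
  by right; exact: charge.
left; case: fp => eB [C [FC fC]].
rewrite (inU eB cc FC (fund_in HBh FC)) (inU eB cc FC (subsetP (subsetDl _ _) f fC)).
done.
Qed.

Definition pset h : {set E} := if pend h is Some y then [set y] else set0.
Definition lhs h : nat := (#|queried h :\: U| +
  (if pend h is Some y then nat_of_bool (y \notin U) else 0))%N.
Definition rhs h : nat := (2 * #|Q' :&: (queried h :|: pset h)|)%N.

Lemma cardDU1 (P : {set E}) z : z \notin P ->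
  #|(z |: P) :\: U| = ((z \notin U) + #|P :\: U|)%N.
Proof.
move=> zP; case: (boolP (z \in U)) => zU /=; rewrite ?add0n.
  apply: eq_card=> x; rewrite !in_setD in_setU1; case: (eqVneq x z) => // ->.
  by rewrite zU.
have -> : (z |: P) :\: U = z |: (P :\: U).
  by apply/setP=> x; rewrite !in_setD !in_setU1 in_setD; case: (eqVneq x z) => // ->; rewrite zU.
by rewrite cardsU1 inE (negbTE zP) andbF.
Qed.

Lemma cardIU1 (X : {set E}) z : z \notin X ->
  #|Q' :&: (z |: X)| = ((z \in Q') + #|Q' :&: X|)%N.
Proof.
move=> zX; case: (boolP (z \in Q')) => zQ /=; rewrite ?add0n.
  have -> : Q' :&: (z |: X) = z |: (Q' :&: X).
    by apply/setP=> x; rewrite !inE; case: (eqVneq x z) => // ->; rewrite zQ.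
  by rewrite cardsU1 inE (negbTE zX) andbF.
apply: eq_card=> x; rewrite !inE; case: (eqVneq x z) => // ->.
by rewrite (negbTE zQ).
Qed.

Lemma invt k : (lhs (history strat w k) <= rhs (history strat w k))%N.
Proof.
elim: k => [|k IH].
  rewrite /lhs /= addn0 (_ : #|_| = 0%N) //; apply/eqP; rewrite cards_eq0; apply/eqP/setP=> x.
  by rewrite in_setD [x \in queried _]inE /= andbF in_nil.
rewrite /=; set h := history strat w k; move: IH; rewrite -/h.
have Hg : goodh w h by exact: hist_vals.
case E1: (strat h) => [z|//].
have zP := strat_new E1.
move: E1; rewrite /strat; case: ifP => // _.
rewrite /lhs /rhs /pset pend_rcons !queried_rcons /= (cardDU1 zP).
case Ep: (pend h) => [y|].
  case=> <- IH.
  by rewrite setU0 setUC; move: IH; lia.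
case Ed: (decide h) => [[x [y|]]|] //= [xz]; subst x.
  have [zP' yP fp cf] := decide_pair Ed.
  have yz : y != z by case: fp => _ [C [_ ]]; rewrite in_setD1 => /andP [].
  have yzP : y \notin z |: queried h by rewrite in_setU1 (negbTE yz) yP.
  rewrite eqxx yzP /= setU0 => IH.
  rewrite -[_ :|: [set y]]setUC -[[set y] :|: _]/(y |: _) (cardIU1 yzP) (cardIU1 zP).
  case: (pc Hg fp cf) => [/andP [-> ->]|[z' /orP [] /eqP -> /andP [_ ->]]] /=; lia.
move=> IH; rewrite setU0 (cardIU1 zP); move: IH; rewrite setU0.
case: (decide_single Ed) => [/(R1_U Hg) -> /=|[_ [e [f [fp cf Hz]]]]]; first by lia.
case: (pc Hg fp cf) => [/andP [eU fU]|[z' /orP [] /eqP -> /andP [H1 H2]]].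
- by move: Hz => /orP [] /andP [/eqP -> _]; rewrite ?eU ?fU /=; lia.
- move: Hz => /orP [] /andP [/eqP -> H3]; first by rewrite H2 /=; lia.
  by rewrite H3 in H1.
- move: Hz => /orP [] /andP [/eqP -> H3]; last by rewrite H2 /=; lia.
  by rewrite H3 in H1.
Qed.
End Charge.
End Alg.

Unset Implicit Arguments.
Local Open Scope ring_scope.

Theorem theorem32 (R : realType) (E : finType) (M : matroid E)
    (A : E -> seq (interval R)) (Bh : {set E}) :
  (forall e, all (@bounded_itv R) (A e)) ->
  is_basis M Bh ->
  exists strat : seq (E * R) -> option E,
    forall w : E -> R, (forall e, in_area (A e) (w e)) ->
    exists k : nat,
      let Q := queried (history strat w k) in
      [/\ strat (history strat w k) = None,
          certificate M A w Q,
          (#|Q| <= #|E|)%N &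
          forall Qstar Bs Q', min_certificate M A w Qstar ->
            opt_Bs_cert M A w Bh Bs Q' ->
            (#|Q| <= 2 * (#|Qstar| + eta1 Qstar Q') + eta2 M w Bh * cmax M)%N].
Proof.
move=> _ HBh; exists (strat M A Bh) => w Hw.
have [k Hk] := terminates M A Bh w.
exists k; cbv zeta.
set h := history (strat M A Bh) w k.
have Hg : goodh w h by exact: hist_vals.
have Hc : certh M A h.
  move: Hk; rewrite /strat; case: (boolP `[< certh M A h >]) => [/asboolP //|_].
  case Ep: (pend _ _ _ h) => [//|]; case Ed: (decide _ _ _ h) => [//|] _.
  have [N1 N2 N3] := decide_none Ed.
  exact: (stuck HBh Hg N1 N2 N3).
split=> //.
- case: Hc => B HB; exists B => w' Hw'; apply: HB; exact/(cons_iff _ _ Hg).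
- exact: max_card.
move=> Qstar Bs Q' [Hcs Hmin] [HBs HsB HQ' _ _].
have Hi := invt HBh Hw HBs HsB HQ' k.
have HU := U_card HBh HsB.
have HQ : (#|Qstar| <= #|Q'|)%N by apply: Hmin; exists Bs.
move: Hi; rewrite /lhs /rhs -/h.
set P := queried h.
have H1 : (#|Q' :&: (P :|: pset M A Bh h)| <= #|Q'|)%N by apply: subset_leq_card; exact: subsetIl.
have H2 := cardsID (U M Bh w) P.
have H3 : (#|P :&: U M Bh w| <= #|U M Bh w|)%N by apply: subset_leq_card; exact: subsetIr.
rewrite /eta1; move: H1 H2 H3 HU HQ.
case: (pend _ _ _ h) => [y|]; [case: (y \notin U M Bh w) => /= | idtac]; lia.
Qed.
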